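(* Let $P$ be a continuous poset. A persistence module $M$ over $P$ is ephemeral if and only if for all $p\in P$ and all $m\in M_p$ the set $\mathrm{supp}(m)=\{x\in P: x\ge p,\ M(p\le x)(m)\neq0\}$ is meager.
   Context: Let $P$ be a poset. A subset is directed if nonempty and any two elements have an upper bound in it. $x\ll y$ ($x$ way below $y$) means: for every directed $D$ whose supremum exists with $y\le\sup D$, some $d\in D$ satisfies $x\le d$. $P$ is continuous if for each $p$ the set $\{x:x\ll p\}$ is directed with supremum $p$. A subset $S\subseteq P$ is meager if there are no $x,y\in S$ with $x\ll y$. $k$ is a commutative ring with unity; a persistence module over $P$ is a functor $M$ from $P$ (as a category, $p\to q$ iff $p\le q$) to $k$-modules, with internal maps $M(p\le q)$. $M$ is ephemeral if $M(p\le q)=0$ for all $p\ll q$. *)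

(* Defs.v *)
From HB Require Import structures.
From mathcomp Require Import all_boot all_order all_algebra.
Set Implicit Arguments. Unset Strict Implicit. Unset Printing Implicit Defensive.
Import Order.TTheory GRing.Theory.
Local Open Scope order_scope.

Section PosetDefs.
Context {disp : Order.disp_t} {P : porderType disp}.

Definition directed (D : P -> Prop) : Prop :=
  (exists x, D x) /\
  (forall x y, D x -> D y -> exists z, D z /\ x <= z /\ y <= z).

Definition is_sup (D : P -> Prop) (s : P) : Prop :=
  (forall x, D x -> x <= s) /\
  (forall u, (forall x, D x -> x <= u) -> s <= u).

Definition way_below (x y : P) : Prop :=
  forall (D : P -> Prop) (s : P), directed D -> is_sup D s -> y <= s ->
    exists d, D d /\ x <= d.

Definition continuous_poset : Prop :=
  forall p : P, directed (fun x => way_below x p) /\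
                is_sup (fun x => way_below x p) p.

Definition meager (S : P -> Prop) : Prop :=
  ~ (exists x y, S x /\ S y /\ way_below x y).

End PosetDefs.

Record pmodule (k : pzRingType) {disp : Order.disp_t} (P : porderType disp) := PModule {
  pm_obj :> P -> lmodType k;
  pm_map : forall p q : P, (p <= q)%O -> {linear pm_obj p -> pm_obj q};
  pm_id : forall (p : P) (h : (p <= p)%O) (m : pm_obj p), pm_map h m = m;
  pm_comp : forall (p q r : P) (hpq : (p <= q)%O) (hqr : (q <= r)%O) (hpr : (p <= r)%O)
              (m : pm_obj p), pm_map hpr m = pm_map hqr (pm_map hpq m)
}.

Definition ephemeral (k : pzRingType) {disp : Order.disp_t} {P : porderType disp}
  (M : pmodule k P) : Prop :=
  forall (p q : P) (h : (p <= q)%O), way_below p q ->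
    forall m : M p, pm_map M h m = 0%R.

Definition supp (k : pzRingType) {disp : Order.disp_t} {P : porderType disp}
  (M : pmodule k P) (p : P) (m : M p) : P -> Prop :=
  fun x => exists h : (p <= x)%O, pm_map M h m <> 0%R.

(* Main.v *)
Require Import Defs.
From HB Require Import structures.
From mathcomp Require Import all_boot all_order all_algebra.
Import Order.TTheory GRing.Theory.

Lemma wb_le (disp : Order.disp_t) (P : porderType disp) (x y : P) :
  way_below x y -> (x <= y)%O.
Proof.
move=> H.
have [|||d [-> //]] := H (fun z => z = y) y.
- split; first by exists y.
  by move=> a b -> ->; exists y; rewrite lexx.
- split; first by move=> a ->.
  by move=> u Hu; apply: Hu.
- by rewrite lexx.
Qed.

Theorem mainTheorem5 (k : comPzRingType) (disp : Order.disp_t) (P : porderType disp)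
  (M : pmodule k P) :
  continuous_poset (P := P) ->
  (ephemeral M <-> forall (p : P) (m : M p), meager (supp m)).
Proof.
move=> _; split.
- move=> He p m [x [y [[hx Hx] [[hy Hy] Hxy]]]].
  apply: Hy.
  rewrite (pm_comp hx (@wb_le _ _ x y Hxy) hy m).
  exact: He.
- move=> Hm p q h Hpq m.
  case: (eqVneq (pm_map M h m) 0%R) => // Hne.
  exfalso; apply: (Hm p m); exists p, q; split; last split => //.
  + exists (lexx p); rewrite pm_id => Hm0.
    by move: Hne; rewrite Hm0 linear0 eqxx.
  + by exists h; apply/eqP.
Qed.
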